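(* Let $M=(m_{ij})$ be an $n\times n$ matrix of integers with $n\geq 3$ and $m_{ij}\geq 1$ for all $i,j$. Then $\mathrm{Cat}(M)\neq\emptyset$ if and only if for every $3\times 3$ submatrix $N$ of $M$ one has $\mathrm{Cat}(N)\neq\emptyset$.
   Context: For an $n\times n$ matrix $M=(m_{ij})$ with entries in the natural numbers, $\mathrm{Cat}(M)$ denotes the collection of categories $A$ with exactly $n$ distinct objects $x_1,\dots,x_n$ such that $|A(x_i,x_j)|=m_{ij}$ for all $i,j$, where $A(x_i,x_j)$ is the set of morphisms from $x_i$ to $x_j$. A $3\times 3$ submatrix of $M$ means $(m_{st})_{s,t\in S}$ for a $3$-element subset $S\subseteq\{1,\dots,n\}$ (same indices for rows and columns, in increasing order). *)

(* Defs.v *)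
From mathcomp Require Import all_boot all_algebra.
Set Implicit Arguments. Unset Strict Implicit. Unset Printing Implicit Defensive.

(* Since only cardinalities matter,
   the hom-set A(x_i,x_j) is represented by the finite type 'I_(M i j).
   comp i j k f g is the composite "g after f" for f : x_i -> x_j, g : x_j -> x_k. *)
Definition is_category (n : nat) (M : 'M[nat]_n)
    (cid : forall i : 'I_n, 'I_(M i i))
    (comp : forall i j k : 'I_n, 'I_(M i j) -> 'I_(M j k) -> 'I_(M i k)) : Prop :=
  [/\ (forall (i j : 'I_n) (f : 'I_(M i j)), comp i i j (cid i) f = f),
      (forall (i j : 'I_n) (f : 'I_(M i j)), comp i j j f (cid j) = f) &
      (forall (i j k l : 'I_n) (f : 'I_(M i j)) (g : 'I_(M j k)) (h : 'I_(M k l)),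
          comp i k l (comp i j k f g) h = comp i j l f (comp j k l g h))].

Definition Cat_nonempty (n : nat) (M : 'M[nat]_n) : Prop :=
  exists (cid : forall i : 'I_n, 'I_(M i i))
         (comp : forall i j k : 'I_n, 'I_(M i j) -> 'I_(M j k) -> 'I_(M i k)),
    is_category cid comp.

(* Main.v *)
Require Import Defs.
From mathcomp Require Import all_boot all_algebra.
From mathcomp Require Import zify.
From Stdlib Require Import FunctionalExtensionality.

Set Implicit Arguments. Unset Strict Implicit. Unset Printing Implicit Defensive.

Definition catF (n : nat) (P : 'I_n -> 'I_n -> nat) : Prop :=
  exists (cid : forall i : 'I_n, 'I_(P i i))
         (comp : forall i j k : 'I_n, 'I_(P i j) -> 'I_(P j k) -> 'I_(P i k)),
  [/\ (forall (i j : 'I_n) (f : 'I_(P i j)), comp i i j (cid i) f = f),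
      (forall (i j : 'I_n) (f : 'I_(P i j)), comp i j j f (cid j) = f) &
      (forall (i j k l : 'I_n) (f : 'I_(P i j)) (g : 'I_(P j k)) (h : 'I_(P k l)),
          comp i k l (comp i j k f g) h = comp i j l f (comp j k l g h))].

Lemma catFE n (M : 'M[nat]_n) : Cat_nonempty M <-> catF (fun i j => M i j).
Proof. exact: iff_refl. Qed.

Lemma catF_restrict n m (P : 'I_n -> 'I_n -> nat) (g : 'I_m -> 'I_n) :
  catF P -> catF (fun i j => P (g i) (g j)).
Proof.
case=> cid [comp [h1 h2 h3]].
exists (fun i => cid (g i)), (fun i j k => comp (g i) (g j) (g k)); split.
- move=> i j f; exact: h1.
- move=> i j f; exact: h2.
- move=> i j k l f g' h; exact: h3.
Qed.

Lemma catF_mxsub n m (M : 'M[nat]_n) (g : 'I_m -> 'I_n) :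
  Cat_nonempty (mxsub g g M) <-> catF (fun i j => M (g i) (g j)).
Proof.
rewrite catFE.
have -> : (fun i j => mxsub g g M i j) = (fun i j => M (g i) (g j)).
  apply: functional_extensionality => i; apply: functional_extensionality => j.
  by rewrite mxE.
exact: iff_refl.
Qed.

Lemma ord_size1 m (u v : 'I_m) : m = 1 -> u = v.
Proof.
case: u => u Hu; case: v => v Hv e; apply: val_inj => /=; subst; lia.
Qed.

Lemma catF_C1 n (P : 'I_n -> 'I_n -> nat) (p q r : 'I_n) :
  catF P -> (forall i j, 0 < P i j) -> P p p = 1 -> P q p * P p r <= P q r.
Proof.
case=> cid [comp [idl idr ass]] pos Pp.
pose a0 : 'I_(P p q) := Ordinal (pos p q).
pose c0 : 'I_(P r p) := Ordinal (pos r p).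
pose F := fun x : 'I_(P q p) * 'I_(P p r) => comp q p r x.1 x.2.
have Finj : injective F.
  move=> [x1 x2] [y1 y2] E; rewrite /F /= in E.
  have e2 : forall (z1 : 'I_(P q p)) z2, comp p q r a0 (comp q p r z1 z2) = z2.
    move=> z1 z2; rewrite -ass (ord_size1 (comp p q p a0 z1) (cid p) Pp); exact: idl.
  have e1 : forall (z1 : 'I_(P q p)) z2, comp q r p (comp q p r z1 z2) c0 = z1.
    move=> z1 z2; rewrite ass (ord_size1 (comp p r p z2 c0) (cid p) Pp); exact: idr.
  congr pair; [by rewrite -(e1 x1 x2) E e1 | by rewrite -(e2 x1 x2) E e2].
by have := @leq_card _ _ F Finj; rewrite card_prod !card_ord.
Qed.

Lemma catF_C2 n (P : 'I_n -> 'I_n -> nat) (p q : 'I_n) :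
  catF P -> (forall i j, 0 < P i j) -> P p p = 1 -> P q q != 1 ->
  P q p * P p q < P q q.
Proof.
case=> cid [comp [idl idr ass]] pos Pp Pq.
pose a0 : 'I_(P p q) := Ordinal (pos p q).
pose F := fun x : 'I_(P q p) * 'I_(P p q) => comp q p q x.1 x.2.
have Finj : injective F.
  move=> [x1 x2] [y1 y2] E; rewrite /F /= in E.
  have e2 : forall (z1 : 'I_(P q p)) z2, comp p q q a0 (comp q p q z1 z2) = z2.
    move=> z1 z2; rewrite -ass (ord_size1 (comp p q p a0 z1) (cid p) Pp); exact: idl.
  pose c0 : 'I_(P q p) := Ordinal (pos q p).
  have e1 : forall (z1 : 'I_(P q p)) z2, comp q q p (comp q p q z1 z2) c0 = z1.
    move=> z1 z2; rewrite ass (ord_size1 (comp p q p z2 c0) (cid p) Pp); exact: idr.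
  congr pair; [by rewrite -(e1 x1 x2) E e1 | by rewrite -(e2 x1 x2) E e2].
have Fne : forall x, F x != cid q.
  move=> [x1 x2]; rewrite /F /=; apply/eqP => E.
  have all_id : forall u : 'I_(P q q), u = cid q.
    move=> u.
    have e : comp p q p (comp p q q x2 u) x1 = cid p := ord_size1 _ _ Pp.
    have step : comp p q q x2 (comp q q q u (comp q p q x1 x2)) = x2.
      by rewrite -ass -ass e idl.
    transitivity (comp q q q (comp q q q (cid q) u) (cid q)); first by rewrite idr idl.
    by rewrite -E ass ass step.
  have P2 : 1 < P q q by have := pos q q; lia.
  have e0 := all_id (Ordinal P2); have e1 := all_id (Ordinal (pos q q)).
  by have := congr1 val (etrans e1 (esym e0)).
have sub : [set F x | x in setT] \subset [set~ cid q].
  apply/subsetP => y /imsetP [x _ ->]; by rewrite in_setC1 Fne.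
have := subset_leq_card sub; rewrite card_imset // cardsC1 cardsT card_prod !card_ord.
have := pos q q; lia.
Qed.

Lemma extend_set n (T : {set 'I_n}) d :
  #|T| + d <= n -> exists U : {set 'I_n}, T \subset U /\ #|U| = #|T| + d.
Proof.
elim: d T => [|d IH] T H; first by exists T; rewrite addn0 subxx.
have : 0 < #|~: T| by have := cardsC T; rewrite card_ord; lia.
case/card_gt0P => x; rewrite in_setC => xT.
have [|U [sub cU]] := IH (x |: T).
  by rewrite cardsU1 xT /= add1n addSnnS.
exists U; split; first by apply: subset_trans sub; exact: subsetUr.
by rewrite cU cardsU1 xT /= add1n addSnnS.
Qed.

Lemma triple n (i j k : 'I_n) : 3 <= n ->
  exists g : 'I_3 -> 'I_n, (forall a b : 'I_3, a < b -> g a < g b) /\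
    exists p q r : 'I_3, [/\ g p = i, g q = j & g r = k].
Proof.
move=> n3.
have c3 : #|[set i; j; k]| <= 3.
  apply: leq_trans (leq_card_setU _ _) _. rewrite cards1.
  apply: leq_trans (leq_add (leq_card_setU _ _) (leqnn _)) _. by rewrite !cards1.
have hT : #|[set i; j; k]| + (3 - #|[set i; j; k]|) <= n by lia.
have [U [sub cU]] := extend_set hT.
rewrite subnKC // in cU.
pose s := [seq x <- enum 'I_n | x \in U].
have es : enum U = s by rewrite /s enumT /enum_mem.
have ss : size s = 3 by rewrite -es -cardE.
have srt : sorted (relpre val ltn) s.
  apply: sorted_filter; first by move=> x y z; exact: ltn_trans.
  rewrite -sorted_map val_enum_ord; exact: iota_ltn_sorted.
exists (fun a => nth i s a); split.
  move=> a b ab.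
  have := sorted_ltn_nth (leT := relpre val ltn) _ i srt.
  apply => //; first by move=> x y z; exact: ltn_trans.
  - by rewrite inE ss.
  - by rewrite inE ss.
have pre : forall x, x \in U -> exists p : 'I_3, nth i s p = x.
  move=> x xU.
  have xs : x \in s by rewrite -es mem_enum.
  have ix : index x s < 3 by rewrite -ss index_mem.
  by exists (Ordinal ix); rewrite /= nth_index.
have hi : i \in [set i; j; k] by rewrite !inE eqxx.
have hj : j \in [set i; j; k] by rewrite !inE eqxx ?orbT.
have hk : k \in [set i; j; k] by rewrite !inE eqxx ?orbT.
have [p Hp] := pre i (subsetP sub i hi).
have [q Hq] := pre j (subsetP sub j hj).
have [r Hr] := pre k (subsetP sub k hk).
by exists p, q, r.
Qed.

Definition isid n (P : 'I_n -> 'I_n -> nat) (a b : 'I_n -> nat) (i j : 'I_n) (f : nat) :=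
  [&& i == j, P i i != 1 & f == b i * a i].
Definition pr n (a b : 'I_n -> nat) (i j : 'I_n) (u : nat) :=
  if u < b i * a j then u %/ a j else 0.
Definition qa n (a b : 'I_n -> nat) (i j : 'I_n) (u : nat) :=
  if u < b i * a j then u %% a j else 0.
Definition cN n (a b : 'I_n -> nat) (i j k : 'I_n) (f g : nat) :=
  pr a b i j f * a k + qa a b j k g.
Definition compn n P (a b : 'I_n -> nat) (i j k : 'I_n) (f g : nat) :=
  if isid P a b i j f then g else if isid P a b j k g then f else cN a b i j k f g.

Lemma cN_lt n (a b : 'I_n -> nat) i j k f g :
  (forall x, 0 < a x) -> (forall x, 0 < b x) -> cN a b i j k f g < b i * a k.
Proof.
move=> apos bpos.
have h1 : pr a b i j f < b i.
  rewrite /pr; case: ifP => h //; by rewrite ltn_divLR.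
have h2 : qa a b j k g < a k.
  rewrite /qa; case: ifP => h //; by rewrite ltn_mod.
rewrite /cN; nia.
Qed.

Lemma compn_assoc n P (a b : 'I_n -> nat) i j k l f g h :
  (forall x, 0 < a x) -> (forall x, 0 < b x) ->
  compn P a b i k l (compn P a b i j k f g) h = compn P a b i j l f (compn P a b j k l g h).
Proof.
move=> apos bpos.
have isidN : forall x y z u v, isid P a b x z (cN a b x y z u v) = false.
  move=> x y z u v; apply/negbTE/and3P => [[/eqP xz _ /eqP e]].
  by have := cN_lt x y z u v apos bpos; rewrite e -xz ltnn.
have prN : forall x y z u v, pr a b x z (cN a b x y z u v) = pr a b x y u.
  move=> x y z u v; rewrite {1}/pr (cN_lt x y z u v apos bpos) /cN divnMDl //.
  rewrite divn_small ?addn0 //.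
  rewrite /qa; case: ifP => _ //; by rewrite ltn_mod.
have qaN : forall x y z u v, qa a b x z (cN a b x y z u v) = qa a b y z v.
  move=> x y z u v; rewrite {1}/qa (cN_lt x y z u v apos bpos) /cN modnMDl modn_small //.
  rewrite /qa; case: ifP => _ //; by rewrite ltn_mod.
case A: (isid P a b i j f).
  move/and3P: (A) => [/eqP ij _ _]; subst j.
  have E1 : forall k' g', compn P a b i i k' f g' = g' by move=> *; rewrite /compn A.
  by rewrite !E1.
case B: (isid P a b j k g).
  move/and3P: (B) => [/eqP jk _ _]; subst k.
  have E2 : compn P a b i j j f g = f by rewrite /compn A B.
  have E3 : forall l' h', compn P a b j j l' g h' = h' by move=> *; rewrite /compn B.
  by rewrite E2 E3.
case C: (isid P a b k l h).
  move/and3P: (C) => [/eqP kl _ _]; subst l.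
  have E4 : compn P a b j k k g h = g by rewrite /compn B C.
  have E5 : compn P a b i j k f g = cN a b i j k f g by rewrite /compn A B.
  by rewrite E4 E5 /compn isidN C.
have E5 : compn P a b i j k f g = cN a b i j k f g by rewrite /compn A B.
have E6 : compn P a b j k l g h = cN a b j k l g h by rewrite /compn B C.
rewrite E5 E6 /compn !isidN A C.
have := prN i j k f g; have := qaN j k l g h; rewrite /cN => -> ->.
done.
Qed.

Lemma construct n (P : 'I_n -> 'I_n -> nat) (a b : 'I_n -> nat) :
  (forall x, 0 < a x) -> (forall x, 0 < b x) ->
  (forall x y, b x * a y <= P x y) ->
  (forall x, P x x != 1 -> b x * a x < P x x) ->
  (forall x, P x x = 1 ->
     [/\ b x = 1, a x = 1, forall y, P x y = a y & forall y, P y x = b y]) ->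
  catF P.
Proof.
move=> apos bpos H2 H3 H4.
pose idn i := if P i i == 1 then 0 else b i * a i.
have idn_lt : forall i, idn i < P i i.
  move=> i; rewrite /idn; case: eqP => h; [by rewrite h | exact: H3 (introN eqP h)].
have compn_lt : forall i j k f g, f < P i j -> g < P j k -> compn P a b i j k f g < P i k.
  move=> i j k f g hf hg; rewrite /compn.
  case: ifP => [/and3P [/eqP ij _ _] | _]; first by rewrite ij.
  case: ifP => [/and3P [/eqP jk _ _] | _]; first by rewrite -jk.
  exact: leq_trans (cN_lt i j k f g apos bpos) (H2 i k).
exists (fun i => Ordinal (idn_lt i)).
exists (fun i j k (f : 'I_(P i j)) (g : 'I_(P j k)) => Ordinal (compn_lt i j k f g (ltn_ord f) (ltn_ord g))).
split.
- move=> i j f; apply: val_inj => /=; rewrite /idn.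
  case: eqP => Pii.
  + have [b1 a1 rowi coli] := H4 i Pii.
    have nP : (P i i != 1) = false by rewrite Pii.
    rewrite /compn /isid nP !andbF /cN /pr /qa.
    rewrite b1 !mul1n -(rowi j) (ltn_ord f) modn_small ?(rowi j) //.
    case: ifP => _; by rewrite ?div0n.
  + have nP : (P i i != 1) = true by apply/eqP.
    by rewrite /compn /isid eqxx nP eqxx.
- move=> i j f; apply: val_inj => /=; rewrite /compn.
  case: ifP => [/and3P [/eqP ij nP /eqP fe] | nA].
    by rewrite fe -ij /idn (negbTE nP).
  rewrite /idn; case: eqP => Pjj.
  + have [b1 a1 rowj colj] := H4 j Pjj.
    have nP : (P j j != 1) = false by rewrite Pjj.
    rewrite /isid nP !andbF /cN /pr /qa a1 !muln1 -colj (ltn_ord f) divn1.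
    by case: ifP; rewrite ?mod0n addn0.
  + have nP : (P j j != 1) = true by apply/eqP.
    by rewrite /isid eqxx nP eqxx.
- move=> i j k l f g h; apply: val_inj => /=; exact: compn_assoc.
Qed.

Theorem mainTheorem9 (n : nat) (M : 'M[nat]_n) :
  3 <= n ->
  (forall i j : 'I_n, 1 <= M i j) ->
  (Cat_nonempty M <->
   forall f : 'I_3 -> 'I_n, (forall a b : 'I_3, a < b -> f a < f b) ->
     Cat_nonempty (mxsub f f M)).
Proof.
move=> n3 pos; split.
- move=> HM g _; apply/catF_mxsub; apply: catF_restrict; exact/catFE.
- move=> H.
  have sub3 : forall i j k : 'I_n, exists g : 'I_3 -> 'I_n,
      catF (fun x y => M (g x) (g y)) /\
      exists p q r, [/\ g p = i, g q = j & g r = k].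
    move=> i j k; have [g [gm [p [q [r [gp gq gr]]]]]] := triple i j k n3.
    exists g; split; [apply/catF_mxsub; exact: H | by exists p, q, r].
  have C1 : forall i j k : 'I_n, M i i = 1 -> M j i * M i k <= M j k.
    move=> i j k Mi; have [g [cg [p [q [r [gp gq gr]]]]]] := sub3 i j k.
    have := catF_C1 (p:=p) q r cg; rewrite /= gp gq gr; apply => //; move=> x y; exact: pos.
  have C2 : forall i j : 'I_n, M i i = 1 -> M j j != 1 -> M j i * M i j < M j j.
    move=> i j Mi Mj; have [g [cg [p [q [r [gp gq gr]]]]]] := sub3 i j j.
    have := catF_C2 (p:=p) (q:=q) cg; rewrite /= gp gq; apply => //; move=> x y; exact: pos.
  apply/catFE.
  case: (pickP (fun i0 => M i0 i0 == 1)) => [i0 /eqP Mi0 | none].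
  + apply: (construct (a := fun y => M i0 y) (b := fun x => M x i0)).
    * by move=> x; exact: pos.
    * by move=> x; exact: pos.
    * by move=> x y; exact: C1.
    * by move=> x Mx; exact: C2.
    * move=> x Mx.
      have e1 := C1 x i0 i0 Mx.
      have p1 := pos i0 x; have p2 := pos x i0; rewrite Mi0 in e1.
      have h1 : M i0 x = 1 by nia.
      have h2 : M x i0 = 1 by nia.
      split => // y.
      * have := C1 i0 x y Mi0; have := C1 x i0 y Mx; rewrite h1 h2; lia.
      * have := C1 i0 y x Mi0; have := C1 x y i0 Mx; rewrite h1 h2; lia.
  + apply: (construct (a := fun _ => 1) (b := fun _ => 1)).
    * by [].
    * by [].
    * by move=> x y /=; rewrite mul1n; exact: pos.
    * move=> x Mx /=; have := pos x x; lia.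
    * by move=> x Mx; move: (none x); rewrite /= Mx eqxx.
Qed.
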